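(* Let $a\in\mathbb{D}$ and $\mathcal{T}\in\{\mathbb{T},\{a\}\}$. For each pair of distinct points $x_1,x_2\in X_{\mathcal{T}}=\mathcal{T}\times\partial\widehat{H^\infty}\times\mathbb{T}$ there exists $\tilde f\in B_{\mathcal{T}}$ such that $\tilde f(x_1)\neq\tilde f(x_2)$.
   Context: $\mathbb{D}$ is the open unit disc and $\mathbb{T}$ the unit circle. $H^\infty$ is the Banach algebra of bounded analytic functions on $\mathbb{D}$ with the supremum norm, $\mathcal{M}$ its maximal ideal space with the Gelfand (weak* ) topology, $\hat v$ the Gelfand transform of $v\in H^\infty$, $\widehat{H^\infty}=\{\hat v: v\in H^\infty\}\subset C(\mathcal{M})$, and $\partial\widehat{H^\infty}$ its Shilov boundary. $\mathcal{S}^\infty=\{f\in H(\mathbb{D}): f'\in H^\infty\}$; every $f\in\mathcal{S}^\infty$ extends continuously to the closed disc $\overline{\mathbb{D}}$, and $\hat f$ denotes this extension. For $\mathcal{T}\in\{\mathbb{T},\{a\}\}$, $X_{\mathcal{T}}=\mathcal{T}\times\partial\widehat{H^\infty}\times\mathbb{T}$ with the product topology, and for $f\in\mathcal{S}^\infty$, $\tilde f(z,\eta,w)=\hat f(z)+\widehat{f'}(\eta)\,w$ for $(z,\eta,w)\in X_{\mathcal{T}}$. $B_{\mathcal{T}}=\{\tilde f: f\in\mathcal{S}^\infty\}\subset C(X_{\mathcal{T}})$. *)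

(* Defs.v *)
From Stdlib Require Import Reals List.
From Coquelicot Require Import Coquelicot.
Open Scope R_scope.

Definition Disc (z : C) : Prop := Cmod z < 1.
Definition Circle (z : C) : Prop := Cmod z = 1.

Definition cderiv (f : C -> C) (z : C) (l : C) : Prop :=
  @is_derive C_AbsRing C_NormedModule f z l.

(* H^infty: bounded holomorphic functions on D.  Each element is represented
   canonically by a function C -> C which vanishes outside D. *)
Definition Hinf (v : C -> C) : Prop :=
  (forall z, Disc z -> exists l, cderiv v z l) /\
  (exists M : R, forall z, Disc z -> Cmod (v z) <= M) /\
  (forall z, ~ Disc z -> v z = 0%C).

Definition one_H (z : C) : C := if Rlt_dec (Cmod z) 1 then 1%C else 0%C.

(* A functional is a map phi : (C -> C) -> C, normalised to vanish
   on non-elements of H^infty, so that distinct functionals on H^infty are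
   distinct maps. *)
Definition MaxIdeal (phi : (C -> C) -> C) : Prop :=
  (forall v, ~ Hinf v -> phi v = 0%C) /\
  (forall u v, Hinf u -> Hinf v -> phi (fun z => u z + v z)%C = (phi u + phi v)%C) /\
  (forall (c : C) v, Hinf v -> phi (fun z => c * v z)%C = (c * phi v)%C) /\
  (forall u v, Hinf u -> Hinf v -> phi (fun z => u z * v z)%C = (phi u * phi v)%C) /\
  phi one_H = 1%C.

(* Gelfand transform: hat v (phi) = phi v.
   Closedness of E (a subset of M) for the Gelfand (weak-star) topology on M:
   E contains every phi in M all of whose basic weak-star neighbourhoods
   {psi : |psi v_i - phi v_i| < eps, i = 1..n} meet E. *)
Definition closed_M (E : ((C -> C) -> C) -> Prop) : Prop :=
  forall phi, MaxIdeal phi ->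
    (forall (vs : list (C -> C)) (eps : R), 0 < eps ->
       exists psi, E psi /\ List.Forall (fun v => Cmod (phi v - psi v)%C < eps) vs) ->
    E phi.

Definition closed_boundary (E : ((C -> C) -> C) -> Prop) : Prop :=
  (forall phi, E phi -> MaxIdeal phi) /\ closed_M E /\
  (forall v, Hinf v ->
     exists phi0, E phi0 /\ forall phi, MaxIdeal phi -> Cmod (phi v) <= Cmod (phi0 v)).

(* Shilov boundary: the smallest closed boundary, i.e. the intersection of all
   closed boundaries *)
Definition Shilov (phi : (C -> C) -> C) : Prop :=
  MaxIdeal phi /\ forall E, closed_boundary E -> E phi.

(* S^infty with derivative: f holomorphic on D with f' (canonical
   representative g, vanishing off D) in H^infty *)
Definition Sinf_with_deriv (f g : C -> C) : Prop :=
  Hinf g /\ forall z, Disc z -> cderiv f z (g z).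

Definition ext_value (f : C -> C) (z L : C) : Prop :=
  filterlim f (within Disc (locally z)) (locally L).

Definition in_X (T : C -> Prop) (x : C * ((C -> C) -> C) * C) : Prop :=
  let '(z, eta, w) := x in T z /\ Shilov eta /\ Circle w.

(* Main.v *)
Require Import Defs.
From Stdlib Require Import Reals Lra Psatz FunctionalExtensionality Classical.
From Coquelicot Require Import Coquelicot.
Open Scope R_scope.

Definition CR := C_R_CompleteNormedModule.

Lemma Cmod_le_sum (z : C) : Cmod z <= Rabs (fst z) + Rabs (snd z).
Proof.
  unfold Cmod. apply Rsqr_incr_0_var.
  - rewrite Rsqr_sqrt by (apply Rplus_le_le_0_compat; apply pow2_ge_0).
    unfold Rsqr. destruct z as [a b]; simpl.
    pose proof (Rabs_pos a); pose proof (Rabs_pos b).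
    replace (a*(a*1) + b*(b*1)) with (Rabs a * Rabs a + Rabs b * Rabs b).
    + nra.
    + rewrite <- !Rabs_mult. rewrite !Rabs_right by nra. ring.
  - pose proof (Rabs_pos (fst z)); pose proof (Rabs_pos (snd z)); lra.
Qed.

Lemma Cmod_fst (z : C) : Rabs (fst z) <= Cmod z.
Proof. apply re_le_Cmod. Qed.
Lemma Cmod_snd (z : C) : Rabs (snd z) <= Cmod z.
Proof. pose proof (Rmax_Cmod z). pose proof (Rmax_r (Rabs (fst z)) (Rabs (snd z))). lra. Qed.

Lemma norm_CR (z : CR) : norm z = Cmod z.
Proof. destruct z as [a b]. unfold norm; simpl. unfold prod_norm; simpl.
  unfold norm; simpl. unfold abs; simpl. unfold Cmod; simpl. f_equal. rewrite !Rmult_1_r. pose proof (Rsqr_abs a); pose proof (Rsqr_abs b); unfold Rsqr in *; lra. Qed.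

Lemma scal_CR (r : R) (z : CR) : scal r z = (RtoC r * z)%C.
Proof. destruct z; unfold scal; simpl. unfold prod_scal; simpl. unfold scal; simpl; unfold mult; simpl.
  apply injective_projections; simpl; ring. Qed.

Lemma plus_CR (x y : CR) : plus x y = (x + y)%C.
Proof. reflexivity. Qed.
Lemma opp_CR (x : CR) : opp x = (- x)%C.
Proof. reflexivity. Qed.
Lemma minus_CR (x y : CR) : minus x y = (x - y)%C.
Proof. reflexivity. Qed.

Definition ccont (v : C -> C) (z : C) : Prop :=
  forall eps, 0 < eps -> exists del, 0 < del /\
    forall w, Cmod (w - z) < del -> Cmod (v w - v z) < eps.

Lemma cont_of_ccont (g : R -> C) (t0 : R) :
  (forall eps, 0 < eps -> exists del, 0 < del /\
    forall t, Rabs (t - t0) < del -> Cmod (g t - g t0) < eps) ->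
  continuous (T:=R_UniformSpace) (U:=CR) g t0.
Proof.
  intros H P [eps HP].
  destruct (H eps (cond_pos eps)) as [del [Hd Ht]].
  exists (mkposreal del Hd). intros t Hb. apply HP.
  specialize (Ht t Hb). split.
  - change (Rabs (fst (g t) - fst (g t0)) < eps).
    eapply Rle_lt_trans; [|exact Ht]. apply (Cmod_fst (g t - g t0)).
  - change (Rabs (snd (g t) - snd (g t0)) < eps).
    eapply Rle_lt_trans; [|exact Ht]. apply (Cmod_snd (g t - g t0)).
Qed.

Lemma cderiv_unfold v z l : cderiv v z l -> forall eps, 0 < eps -> exists del, 0 < del /\
  forall w, Cmod (w - z) < del -> Cmod (v w - v z - l * (w - z)) <= eps * Cmod (w - z).
Proof.
  intros [_ H] eps He.
  specialize (H z (fun P HP => HP) (mkposreal eps He)).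
  destruct H as [del Hd]. exists del. split; [apply cond_pos|].
  intros w Hw. specialize (Hd w Hw). simpl in Hd.
  replace (v w - v z - l * (w - z))%C with (minus (minus (v w) (v z)) (scal (minus w z) l)).
  exact Hd.
  unfold minus, plus, opp, scal; simpl. unfold mult; simpl.
  apply injective_projections; simpl; ring.
Qed.

Lemma cderiv_fold v z l : (forall eps, 0 < eps -> exists del, 0 < del /\
  forall w, Cmod (w - z) < del -> Cmod (v w - v z - l * (w - z)) <= eps * Cmod (w - z)) ->
  cderiv v z l.
Proof.
  intros H. split.
  - apply is_linear_scal_l.
  - intros x Hx. apply (is_filter_lim_locally_unique (K:=C_AbsRing) (V:=AbsRing_NormedModule C_AbsRing)) in Hx. subst x.
    intros eps. destruct (H eps (cond_pos eps)) as [del [Hd Hw]].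
    exists (mkposreal del Hd). intros w Hb. specialize (Hw w Hb).
    change (Cmod (minus (minus (v w) (v z)) (scal (minus w z) l)) <= eps * Cmod (minus w z)).
    replace (minus (minus (v w) (v z)) (scal (minus w z) l)) with (v w - v z - l * (w - z))%C.
    replace (minus w z) with (w - z)%C by reflexivity.
    exact Hw.
    unfold minus, plus, opp, scal; simpl. unfold mult; simpl.
    apply injective_projections; simpl; ring.
Qed.

Definition cdiff v z := exists l, cderiv v z l.

Lemma ccont_of_cdiff v z : cdiff v z -> ccont v z.
Proof.
  intros [l Hl] eps He.
  destruct (cderiv_unfold v z l Hl 1 Rlt_0_1) as [del [Hd Hw]].
  pose proof (Cmod_ge_0 l).
  exists (Rmin del (eps / (Cmod l + 1))). split.
  - apply Rmin_pos; auto. apply Rdiv_lt_0_compat; lra.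
  - intros w Hw'.
    assert (H1 : Cmod (w - z) < del) by (eapply Rlt_le_trans; [exact Hw'|apply Rmin_l]).
    assert (H2 : Cmod (w - z) < eps / (Cmod l + 1)) by (eapply Rlt_le_trans; [exact Hw'|apply Rmin_r]).
    specialize (Hw w H1).
    replace (v w - v z)%C with ((v w - v z - l * (w - z)) + l * (w - z))%C by ring.
    eapply Rle_lt_trans; [apply Cmod_triangle|].
    rewrite Cmod_mult.
    apply Rmult_lt_compat_r with (r := Cmod l + 1) in H2; [|lra].
    unfold Rdiv in H2. rewrite Rmult_assoc, Rinv_l, Rmult_1_r in H2 by lra.
    pose proof (Cmod_ge_0 (w - z)). nra.
Qed.

Definition Hi (v : C -> C) (y a b : R) : C := RInt (V:=CR) (fun t => v (t,y)) a b.
Definition Vi (v : C -> C) (x a b : R) : C := RInt (V:=CR) (fun s => v (x,s)) a b.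
Definition rect v a b c d : C := (Hi v c a b - Hi v d a b + Ci * (Vi v b c d - Vi v a c d))%C.

Lemma Cmod_pair_x t t0 y : Cmod ((t, y) - (t0, y))%C = Rabs (t - t0).
Proof.
  replace ((t, y) - (t0, y))%C with (RtoC (t - t0)).
  apply Cmod_R. apply injective_projections; simpl; ring.
Qed.
Lemma Cmod_pair_y s s0 x : Cmod ((x, s) - (x, s0))%C = Rabs (s - s0).
Proof.
  replace ((x, s) - (x, s0))%C with (Ci * RtoC (s - s0))%C.
  rewrite Cmod_mult, Cmod_R. replace (Cmod Ci) with 1. ring.
  unfold Cmod, Ci; simpl. replace (0 * (0 * 1) + 1 * (1 * 1)) with 1 by ring. rewrite sqrt_1; auto.
  apply injective_projections; simpl; ring.
Qed.

Lemma exH v y a b : (forall t, Rmin a b <= t <= Rmax a b -> ccont v (t,y)) ->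
  ex_RInt (V:=CR) (fun t => v (t,y)) a b.
Proof.
  intros H. apply ex_RInt_continuous. intros t0 Ht0.
  apply cont_of_ccont. intros eps He.
  destruct (H t0 Ht0 eps He) as [del [Hd Hw]]. exists del. split; auto.
  intros t Ht. apply Hw. rewrite Cmod_pair_x. exact Ht.
Qed.
Lemma exV v x a b : (forall s, Rmin a b <= s <= Rmax a b -> ccont v (x,s)) ->
  ex_RInt (V:=CR) (fun s => v (x,s)) a b.
Proof.
  intros H. apply ex_RInt_continuous. intros t0 Ht0.
  apply cont_of_ccont. intros eps He.
  destruct (H t0 Ht0 eps He) as [del [Hd Hw]]. exists del. split; auto.
  intros t Ht. apply Hw. rewrite Cmod_pair_y. exact Ht.
Qed.

Lemma RInt_chasles_C (f : R -> C) a b c : ex_RInt (V:=CR) f a b -> ex_RInt (V:=CR) f b c ->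
  (RInt (V:=CR) f a b + RInt (V:=CR) f b c)%C = RInt (V:=CR) f a c.
Proof. intros H1 H2. rewrite <- (RInt_Chasles (V:=CR) f a b c H1 H2). reflexivity. Qed.

Lemma RInt_swap_C (f : R -> C) a b : ex_RInt (V:=CR) f a b ->
  RInt (V:=CR) f b a = (- RInt (V:=CR) f a b)%C.
Proof. intros H. rewrite <- (opp_RInt_swap (V:=CR) f a b H). reflexivity. Qed.

Definition RCs (v : C -> C) a b c d := forall x y, a <= x <= b -> c <= y <= d -> ccont v (x,y).

Lemma minmax a b t : a <= b -> Rmin a b <= t <= Rmax a b -> a <= t <= b.
Proof. intros H. rewrite Rmin_left, Rmax_right by lra. auto. Qed.

Lemma exH_s v y a b : a <= b -> (forall t, a <= t <= b -> ccont v (t,y)) ->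
  ex_RInt (V:=CR) (fun t => v (t,y)) a b.
Proof. intros Hab H. apply exH. intros t Ht. apply H. apply minmax; auto. Qed.
Lemma exV_s v x a b : a <= b -> (forall s, a <= s <= b -> ccont v (x,s)) ->
  ex_RInt (V:=CR) (fun s => v (x,s)) a b.
Proof. intros Hab H. apply exV. intros t Ht. apply H. apply minmax; auto. Qed.

Lemma rect_split v a b c d : a <= b -> c <= d -> RCs v a b c d ->
  let m := (a + b) / 2 in let n := (c + d) / 2 in
  rect v a b c d = (rect v a m c n + rect v m b c n + rect v a m n d + rect v m b n d)%C.
Proof.
  intros Hab Hcd H m n.
  assert (Hm : a <= m <= b) by (unfold m; lra).
  assert (Hn : c <= n <= d) by (unfold n; lra).
  assert (E1 : forall y, c <= y <= d -> (Hi v y a m + Hi v y m b)%C = Hi v y a b).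
  { intros y Hy. apply RInt_chasles_C; apply exH_s; try lra; intros t Ht; apply H; lra. }
  assert (E2 : forall x, a <= x <= b -> (Vi v x c n + Vi v x n d)%C = Vi v x c d).
  { intros x Hx. apply RInt_chasles_C; apply exV_s; try lra; intros t Ht; apply H; lra. }
  unfold rect.
  rewrite <- (E1 c), <- (E1 d), <- (E2 a), <- (E2 b) by lra.
  ring.
Qed.

Lemma rect_swap_x v a b c d : (forall y, c <= y <= d -> forall t, Rmin a b <= t <= Rmax a b -> ccont v (t,y)) ->
  (forall x, x = a \/ x = b -> forall s, Rmin c d <= s <= Rmax c d -> ccont v (x,s)) -> c <= d ->
  rect v b a c d = (- rect v a b c d)%C.
Proof.
  intros H1 H2 Hcd. unfold rect, Hi, Vi.
  rewrite (RInt_swap_C _ a b), (RInt_swap_C (fun t => v (t,d)) a b).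
  ring.
  apply exH; apply H1; lra. apply exH; apply H1; lra.
Qed.

Lemma rect_swap_y v a b c d : (forall x, a <= x <= b -> forall s, Rmin c d <= s <= Rmax c d -> ccont v (x,s)) -> a <= b ->
  rect v a b d c = (- rect v a b c d)%C.
Proof.
  intros H1 Hab. unfold rect, Hi, Vi.
  rewrite (RInt_swap_C _ c d), (RInt_swap_C (fun s => v (a,s)) c d).
  ring.
  apply exV; apply H1; lra. apply exV; apply H1; lra.
Qed.

Lemma is_RInt_affR r s a b : is_RInt (fun t => r + s * t) a b (r * (b - a) + s * (b ^ 2 - a ^ 2) / 2).
Proof.
  assert (H := is_RInt_derive (V:=R_CompleteNormedModule) (fun t => r*t + s*t^2/2) (fun t => r + s*t) a b).
  match type of H with _ -> _ -> is_RInt _ _ _ ?l => replace (r * (b - a) + s * (b ^ 2 - a ^ 2) / 2) with l end.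
  - apply H.
    + intros x _. auto_derive; auto. field.
    + intros x _. apply (ex_derive_continuous (K:=R_AbsRing) (V:=R_NormedModule)). auto_derive; auto.
  - unfold minus, plus, opp; simpl. field.
Qed.

Lemma is_RInt_aff (p q : C) a b : is_RInt (V:=CR) (fun t => (p + q * RtoC t)%C) a b
  (p * RtoC (b - a) + q * RtoC ((b ^ 2 - a ^ 2) / 2))%C.
Proof.
  replace (p * RtoC (b - a) + q * RtoC ((b ^ 2 - a ^ 2) / 2))%C with
    ((fst p * (b - a) + fst q * (b ^ 2 - a ^ 2) / 2), (snd p * (b - a) + snd q * (b ^ 2 - a ^ 2) / 2)).
  2:{ apply injective_projections; simpl; field. }
  apply (is_RInt_fct_extend_pair (U:=R_NormedModule) (V:=R_NormedModule)).
  - eapply is_RInt_ext; [|apply is_RInt_affR]. intros x _. simpl. ring.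
  - eapply is_RInt_ext; [|apply is_RInt_affR]. intros x _. simpl. ring.
Qed.

Lemma rect_affine (al be : C) a b c d : rect (fun z => al + be * z)%C a b c d = 0%C.
Proof.
  unfold rect, Hi, Vi.
  assert (HH : forall y, RInt (V:=CR) (fun t => (al + be * (t, y))%C) a b =
     ((al + be * (0,y)) * RtoC (b - a) + be * RtoC ((b ^ 2 - a ^ 2) / 2))%C).
  { intros y. apply (is_RInt_unique (V:=CR)). eapply is_RInt_ext; [|apply is_RInt_aff].
    intros x _. apply injective_projections; simpl; ring. }
  assert (VV : forall x, RInt (V:=CR) (fun s => (al + be * (x, s))%C) c d =
     ((al + be * (x,0)) * RtoC (d - c) + (be * Ci) * RtoC ((d ^ 2 - c ^ 2) / 2))%C).
  { intros x. apply (is_RInt_unique (V:=CR)). eapply is_RInt_ext; [|apply is_RInt_aff].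
    intros y _. apply injective_projections; simpl; ring. }
  rewrite !HH, !VV. apply injective_projections; simpl; ring.
Qed.

Lemma Cmod_Ci_mult x : Cmod (Ci * x) = Cmod x.
Proof. rewrite Cmod_mult. replace (Cmod Ci) with 1. ring.
  unfold Cmod, Ci; simpl. replace (0 * (0 * 1) + 1 * (1 * 1)) with 1 by ring. rewrite sqrt_1; auto. Qed.

Lemma RInt_bound_C (f : R -> C) a b M : a <= b -> ex_RInt (V:=CR) f a b ->
  (forall t, a <= t <= b -> Cmod (f t) <= M) -> Cmod (RInt (V:=CR) f a b) <= (b - a) * M.
Proof.
  intros Hab Hex H. rewrite <- norm_CR.
  apply (norm_RInt_le_const (V:=CR) f a b); auto.
  intros x Hx. rewrite norm_CR. auto.
  apply (RInt_correct (V:=CR)); auto.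
Qed.

Lemma ccont_affine al be z : ccont (fun w => al + be * w)%C z.
Proof.
  intros eps He. exists (eps / (Cmod be + 1)). pose proof (Cmod_ge_0 be). split.
  apply Rdiv_lt_0_compat; lra.
  intros w Hw. replace (al + be * w - (al + be * z))%C with (be * (w - z))%C by ring.
  rewrite Cmod_mult. pose proof (Cmod_ge_0 (w - z)).
  apply Rmult_lt_compat_r with (r := Cmod be + 1) in Hw; [|lra].
  unfold Rdiv in Hw. rewrite Rmult_assoc, Rinv_l, Rmult_1_r in Hw by lra. nra.
Qed.

Lemma rect_sub_affine v al be a b c d : a <= b -> c <= d -> RCs v a b c d ->
  rect v a b c d = rect (fun z => v z - (al + be * z))%C a b c d.
Proof.
  intros Hab Hcd H.
  assert (EH : forall y, c <= y <= d -> Hi (fun z => v z - (al + be * z))%C y a b = (Hi v y a b - Hi (fun z => al + be * z)%C y a b)%C).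
  { intros y Hy. unfold Hi. apply (RInt_minus (V:=CR) (fun t => v (t,y)) (fun t => (al + be * (t,y))%C)).
    apply (exH_s v y); [lra|]. intros t Ht; apply H; lra.
    apply (exH_s (fun z => al + be * z)%C y); [lra|]. intros t Ht; apply ccont_affine. }
  assert (EV : forall x, a <= x <= b -> Vi (fun z => v z - (al + be * z))%C x c d = (Vi v x c d - Vi (fun z => al + be * z)%C x c d)%C).
  { intros x Hx. unfold Vi. apply (RInt_minus (V:=CR) (fun s => v (x,s)) (fun s => (al + be * (x,s))%C)).
    apply (exV_s v x); [lra|]. intros t Ht; apply H; lra.
    apply (exV_s (fun z => al + be * z)%C x); [lra|]. intros t Ht; apply ccont_affine. }
  unfold rect at 2. rewrite !EH, !EV by lra.
  pose proof (rect_affine al be a b c d) as Z. unfold rect in Z.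
  unfold rect. match type of Z with ?Zl = _ => match goal with |- ?L = ?R =>
    assert (HL : L = (R + Zl)%C) by ring end end.
  rewrite HL, Z. ring.
Qed.

Lemma rect_bound e a b c d K : a <= b -> c <= d -> RCs e a b c d ->
  (forall x y, a <= x <= b -> c <= y <= d -> Cmod (e (x,y)) <= K) ->
  Cmod (rect e a b c d) <= 2 * (b - a) * K + 2 * (d - c) * K.
Proof.
  intros Hab Hcd Hc HK. unfold rect.
  assert (B1 : forall y, c <= y <= d -> Cmod (Hi e y a b) <= (b - a) * K).
  { intros y Hy. apply RInt_bound_C; [lra| |].
    apply (exH_s e y); [lra|]. intros t Ht; apply Hc; lra.
    intros t Ht; apply HK; lra. }
  assert (B2 : forall x, a <= x <= b -> Cmod (Vi e x c d) <= (d - c) * K).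
  { intros x Hx. apply RInt_bound_C; [lra| |].
    apply (exV_s e x); [lra|]. intros t Ht; apply Hc; lra.
    intros t Ht; apply HK; lra. }
  eapply Rle_trans; [apply Cmod_triangle|].
  rewrite Cmod_Ci_mult.
  unfold Cminus.
  pose proof (Cmod_triangle (Hi e c a b) (- Hi e d a b)).
  pose proof (Cmod_triangle (Vi e b c d) (- Vi e a c d)).
  rewrite Cmod_opp in *.
  pose proof (B1 c ltac:(lra)). pose proof (B1 d ltac:(lra)).
  pose proof (B2 a ltac:(lra)). pose proof (B2 b ltac:(lra)).
  lra.
Qed.

Record rc := mkrc { ra : R; rb : R; rcc : R; rd : R }.
Definition Ir v r := rect v (ra r) (rb r) (rcc r) (rd r).
Definition q1 r := mkrc (ra r) ((ra r + rb r)/2) (rcc r) ((rcc r + rd r)/2).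
Definition q2 r := mkrc ((ra r + rb r)/2) (rb r) (rcc r) ((rcc r + rd r)/2).
Definition q3 r := mkrc (ra r) ((ra r + rb r)/2) ((rcc r + rd r)/2) (rd r).
Definition q4 r := mkrc ((ra r + rb r)/2) (rb r) ((rcc r + rd r)/2) (rd r).
Definition step v r :=
  if Rle_dec (Cmod (Ir v r) / 4) (Cmod (Ir v (q1 r))) then q1 r else
  if Rle_dec (Cmod (Ir v r) / 4) (Cmod (Ir v (q2 r))) then q2 r else
  if Rle_dec (Cmod (Ir v r) / 4) (Cmod (Ir v (q3 r))) then q3 r else q4 r.
Fixpoint sq v r n := match n with O => r | S n => step v (sq v r n) end.

Lemma step_geom v r : ra r <= rb r -> rcc r <= rd r ->
  let s := step v r in
  ra r <= ra s /\ rb s <= rb r /\ rb s - ra s = (rb r - ra r) / 2 /\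
  rcc r <= rcc s /\ rd s <= rd r /\ rd s - rcc s = (rd r - rcc r) / 2.
Proof.
  intros H1 H2 s. unfold s, step.
  repeat destruct Rle_dec; unfold q1, q2, q3, q4; simpl; lra.
Qed.

Lemma step_big v r : ra r <= rb r -> rcc r <= rd r -> RCs v (ra r) (rb r) (rcc r) (rd r) ->
  Cmod (Ir v r) <= 4 * Cmod (Ir v (step v r)).
Proof.
  intros H1 H2 H3.
  assert (Hs : Cmod (Ir v r) <= Cmod (Ir v (q1 r)) + Cmod (Ir v (q2 r)) + Cmod (Ir v (q3 r)) + Cmod (Ir v (q4 r))).
  { unfold Ir at 1. rewrite (rect_split v _ _ _ _ H1 H2 H3).
    unfold Ir, q1, q2, q3, q4; simpl.
    eapply Rle_trans; [apply Cmod_triangle|].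
    eapply Rle_trans; [apply Rplus_le_compat_r; apply Cmod_triangle|].
    eapply Rle_trans; [apply Rplus_le_compat_r; apply Rplus_le_compat_r; apply Cmod_triangle|].
    lra. }
  unfold step. repeat destruct Rle_dec; lra.
Qed.

Lemma pow2R_pos n : 0 < 2 ^ n.
Proof. apply pow_lt; lra. Qed.

Lemma sq_inv v a b c d : a <= b -> c <= d -> RCs v a b c d ->
  forall n, let r := sq v (mkrc a b c d) n in
  a <= ra r /\ rb r <= b /\ rb r - ra r = (b - a) / 2 ^ n /\
  c <= rcc r /\ rd r <= d /\ rd r - rcc r = (d - c) / 2 ^ n /\
  Cmod (rect v a b c d) <= (2 ^ n) ^ 2 * Cmod (Ir v r).
Proof.
  intros Hab Hcd HR n. induction n as [|n IH]; intros r.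
  - unfold r; simpl. unfold Ir; simpl. repeat split; try lra.
  - simpl in r. destruct IH as (I1 & I2 & I3 & I4 & I5 & I6 & I7).
    set (r0 := sq v (mkrc a b c d) n) in *.
    pose proof (pow2R_pos n).
    assert (S1 : ra r0 <= rb r0). { assert (0 <= (b - a) / 2 ^ n) by (apply Rdiv_le_0_compat; lra). lra. }
    assert (S2 : rcc r0 <= rd r0). { assert (0 <= (d - c) / 2 ^ n) by (apply Rdiv_le_0_compat; lra). lra. }
    destruct (step_geom v r0 S1 S2) as (G1 & G2 & G3 & G4 & G5 & G6).
    assert (HR0 : RCs v (ra r0) (rb r0) (rcc r0) (rd r0)).
    { intros x y Hx Hy. apply HR; lra. }
    pose proof (step_big v r0 S1 S2 HR0).
    unfold r. replace (2 ^ S n) with (2 * 2 ^ n) by (simpl; ring).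
    repeat split; try lra.
    + rewrite G3, I3. field. lra.
    + rewrite G6, I6. field. lra.
    + eapply Rle_trans; [exact I7|]. replace ((2 * 2 ^ n) ^ 2) with ((2 ^ n) ^ 2 * 4) by ring.
      rewrite Rmult_assoc. apply Rmult_le_compat_l; [nra|]. lra.
Qed.

Lemma ccont_sub f g z : ccont f z -> ccont g z -> ccont (fun w => f w - g w)%C z.
Proof.
  intros Hf Hg eps He.
  destruct (Hf (eps/2) ltac:(lra)) as [d1 [Hd1 H1]].
  destruct (Hg (eps/2) ltac:(lra)) as [d2 [Hd2 H2]].
  exists (Rmin d1 d2). split. apply Rmin_pos; auto.
  intros w Hw. pose proof (Rmin_l d1 d2). pose proof (Rmin_r d1 d2).
  specialize (H1 w ltac:(lra)). specialize (H2 w ltac:(lra)).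
  replace (f w - g w - (f z - g z))%C with ((f w - f z) + - (g w - g z))%C by ring.
  eapply Rle_lt_trans; [apply Cmod_triangle|]. rewrite Cmod_opp. lra.
Qed.

Lemma exists_pow2 S del : 0 < del -> exists n, S / 2 ^ n < del.
Proof.
  intros Hd. destruct (Pow_x_infinity 2 ltac:(rewrite Rabs_right; lra) (Rabs S / del + 1)) as [N HN].
  exists N. specialize (HN N (le_n N)). rewrite Rabs_right in HN by (left; apply pow2R_pos).
  pose proof (pow2R_pos N). apply Rmult_lt_reg_r with (2 ^ N); auto.
  unfold Rdiv. rewrite Rmult_assoc, Rinv_l, Rmult_1_r by lra.
  assert (Rabs S / del < 2 ^ N) by lra.
  apply Rmult_lt_compat_r with (r := del) in H0; auto. unfold Rdiv in H0.
  rewrite Rmult_assoc, Rinv_l, Rmult_1_r in H0 by lra.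
  pose proof (Rle_abs S). nra.
Qed.

Lemma goursat v a b c d : a <= b -> c <= d ->
  (forall x y, a <= x <= b -> c <= y <= d -> cdiff v (x,y)) -> rect v a b c d = 0%C.
Proof.
  intros Hab Hcd Hd.
  assert (HR : RCs v a b c d) by (intros x y Hx Hy; apply ccont_of_cdiff, Hd; auto).
  pose proof (sq_inv v a b c d Hab Hcd HR) as INV.
  set (s := sq v (mkrc a b c d)) in *.
  assert (SO : forall n, ra (s n) <= rb (s n) /\ rcc (s n) <= rd (s n)).
  { intros n. destruct (INV n) as (_ & _ & I3 & _ & _ & I6 & _). pose proof (pow2R_pos n).
    assert (0 <= (b - a) / 2 ^ n) by (apply Rdiv_le_0_compat; lra).
    assert (0 <= (d - c) / 2 ^ n) by (apply Rdiv_le_0_compat; lra). lra. }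
  assert (MO : forall m k, (m <= k)%nat -> ra (s m) <= ra (s k) /\ rb (s k) <= rb (s m) /\
                rcc (s m) <= rcc (s k) /\ rd (s k) <= rd (s m)).
  { intros m k Hmk. induction Hmk as [|k Hk IH]. lra.
    destruct (SO k) as [S1 S2]. destruct (step_geom v (s k) S1 S2) as (G1 & G2 & _ & G4 & G5 & _).
    change (s (S k)) with (step v (s k)). lra. }
  assert (CR1 : forall m n, ra (s m) <= rb (s n) /\ rcc (s m) <= rd (s n)).
  { intros m n. destruct (MO m (Nat.max m n) (Nat.le_max_l _ _)) as (A1 & _ & A3 & _).
    destruct (MO n (Nat.max m n) (Nat.le_max_r _ _)) as (_ & B2 & _ & B4).
    destruct (SO (Nat.max m n)). lra. }
  destruct (completeness (fun x => exists n, x = ra (s n))) as [px [Hpx1 Hpx2]].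
  { exists b. intros x [n ->]. destruct (INV n) as (_ & I2 & _). destruct (SO n). lra. }
  { exists (ra (s 0%nat)). exists 0%nat. reflexivity. }
  destruct (completeness (fun x => exists n, x = rcc (s n))) as [py [Hpy1 Hpy2]].
  { exists d. intros x [n ->]. destruct (INV n) as (_ & _ & _ & _ & I5 & _). destruct (SO n). lra. }
  { exists (rcc (s 0%nat)). exists 0%nat. reflexivity. }
  assert (PX : forall n, ra (s n) <= px <= rb (s n)).
  { intros n. split. apply Hpx1. exists n; auto. apply Hpx2. intros x [m ->]. apply CR1. }
  assert (PY : forall n, rcc (s n) <= py <= rd (s n)).
  { intros n. split. apply Hpy1. exists n; auto. apply Hpy2. intros x [m ->]. apply CR1. }
  destruct (Hd px py) as [l Hl].
  { destruct (PX 0%nat), (INV 0%nat) as (I1 & I2 & _). lra. }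
  { destruct (PY 0%nat), (INV 0%nat) as (_ & _ & _ & I4 & I5 & _). lra. }
  set (S := (b - a) + (d - c)).
  assert (KEY : forall eps, 0 < eps -> Cmod (rect v a b c d) <= 2 * eps * S ^ 2).
  { intros eps He.
    destruct (cderiv_unfold v (px,py) l Hl eps He) as [del [Hdel Hw]].
    destruct (exists_pow2 S del Hdel) as [n Hn].
    destruct (INV n) as (I1 & I2 & I3 & I4 & I5 & I6 & I7).
    pose proof (pow2R_pos n).
    set (p := (px, py)).
    set (e := fun z => (v z - ((v p - l * p) + l * z))%C).
    assert (HRn : RCs v (ra (s n)) (rb (s n)) (rcc (s n)) (rd (s n))).
    { intros x y Hx Hy. apply HR; lra. }
    assert (E1 : Ir v (s n) = rect e (ra (s n)) (rb (s n)) (rcc (s n)) (rd (s n))).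
    { unfold Ir. apply rect_sub_affine; try apply SO; auto. }
    assert (HRe : RCs e (ra (s n)) (rb (s n)) (rcc (s n)) (rd (s n))).
    { intros x y Hx Hy. apply ccont_sub. apply HRn; auto. apply ccont_affine. }
    assert (EB : forall x y, ra (s n) <= x <= rb (s n) -> rcc (s n) <= y <= rd (s n) ->
                  Cmod (e (x,y)) <= eps * (S / 2 ^ n)).
    { intros x y Hx Hy.
      assert (HC : Cmod ((x,y) - p)%C <= S / 2 ^ n).
      { eapply Rle_trans; [apply Cmod_le_sum|]. simpl.
        destruct (PX n), (PY n).
        assert (Rabs (x + - px) <= rb (s n) - ra (s n)) by (apply Rabs_le; lra).
        assert (Rabs (y + - py) <= rd (s n) - rcc (s n)) by (apply Rabs_le; lra).
        unfold S. replace (((b - a) + (d - c)) / 2 ^ n) with ((b - a) / 2 ^ n + (d - c) / 2 ^ n) by (field; lra).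
        lra. }
      assert (Hlt : Cmod ((x,y) - p)%C < del) by lra. specialize (Hw (x,y) Hlt).
      unfold e. replace (v (x, y) - (v p - l * p + l * (x, y)))%C with (v (x, y) - v p - l * ((x, y) - p))%C by ring.
      eapply Rle_trans; [exact Hw|]. apply Rmult_le_compat_l. lra. exact HC. }
    destruct (SO n) as [S1 S2].
    pose proof (rect_bound e _ _ _ _ _ S1 S2 HRe EB) as RB.
    rewrite <- E1 in RB.
    rewrite I3, I6 in RB.
    eapply Rle_trans; [exact I7|].
    assert (Q : 2 * ((b - a) / 2 ^ n) * (eps * (S / 2 ^ n)) + 2 * ((d - c) / 2 ^ n) * (eps * (S / 2 ^ n))
                = 2 * eps * S ^ 2 / (2 ^ n) ^ 2) by (unfold S; field; lra).
    rewrite Q in RB.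
    apply Rmult_le_compat_l with (r := (2 ^ n) ^ 2) in RB; [|nra].
    eapply Rle_trans; [exact RB|]. right. field. lra. }
  apply Cmod_eq_0.
  pose proof (Cmod_ge_0 (rect v a b c d)).
  destruct (Req_dec (Cmod (rect v a b c d)) 0) as [Z|NZ]; auto.
  exfalso. set (I := Cmod (rect v a b c d)) in *.
  assert (HS : 0 <= S ^ 2) by apply pow2_ge_0.
  specialize (KEY (I / (4 * S ^ 2 + 1)) ltac:(apply Rdiv_lt_0_compat; lra)).
  assert (2 * (I / (4 * S ^ 2 + 1)) * S ^ 2 < I).
  { apply Rmult_lt_reg_r with (4 * S ^ 2 + 1); [lra|].
    replace (2 * (I / (4 * S ^ 2 + 1)) * S ^ 2 * (4 * S ^ 2 + 1)) with (2 * I * S ^ 2) by (field; lra).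
    nra. }
  lra.
Qed.

Lemma rect_swap_x' v a b c d :
  (forall x y, Rmin a b <= x <= Rmax a b -> Rmin c d <= y <= Rmax c d -> ccont v (x,y)) ->
  rect v b a c d = (- rect v a b c d)%C.
Proof.
  intros H. unfold rect, Hi, Vi.
  rewrite (RInt_swap_C _ a b), (RInt_swap_C (fun t => v (t,d)) a b).
  ring.
  apply exH; intros t Ht; apply H; auto; unfold Rmin, Rmax; destruct Rle_dec; lra.
  apply exH; intros t Ht; apply H; auto; unfold Rmin, Rmax; destruct Rle_dec; lra.
Qed.

Lemma rect_swap_y' v a b c d :
  (forall x y, Rmin a b <= x <= Rmax a b -> Rmin c d <= y <= Rmax c d -> ccont v (x,y)) ->
  rect v a b d c = (- rect v a b c d)%C.
Proof.
  intros H. unfold rect, Hi, Vi.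
  rewrite (RInt_swap_C _ c d), (RInt_swap_C (fun s => v (a,s)) c d).
  ring.
  apply exV; intros t Ht; apply H; auto; unfold Rmin, Rmax; destruct Rle_dec; lra.
  apply exV; intros t Ht; apply H; auto; unfold Rmin, Rmax; destruct Rle_dec; lra.
Qed.

Lemma goursat_gen v a b c d :
  (forall x y, Rmin a b <= x <= Rmax a b -> Rmin c d <= y <= Rmax c d -> cdiff v (x,y)) ->
  rect v a b c d = 0%C.
Proof.
  intros H.
  assert (Hc : forall x y, Rmin a b <= x <= Rmax a b -> Rmin c d <= y <= Rmax c d -> ccont v (x,y))
    by (intros; apply ccont_of_cdiff; auto).
  assert (Hc' : forall x y, Rmin b a <= x <= Rmax b a -> Rmin d c <= y <= Rmax d c -> ccont v (x,y))
    by (rewrite Rmin_comm, Rmax_comm, (Rmin_comm d c), (Rmax_comm d c); auto).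
  assert (Hc1 : forall x y, Rmin a b <= x <= Rmax a b -> Rmin d c <= y <= Rmax d c -> ccont v (x,y))
    by (rewrite (Rmin_comm d c), (Rmax_comm d c); auto).
  assert (Hc2 : forall x y, Rmin b a <= x <= Rmax b a -> Rmin c d <= y <= Rmax c d -> ccont v (x,y))
    by (rewrite (Rmin_comm b a), (Rmax_comm b a); auto).
  destruct (Rle_dec a b) as [Hab|Hab]; destruct (Rle_dec c d) as [Hcd|Hcd].
  - apply goursat; auto. intros x y Hx Hy. apply H.
    rewrite Rmin_left, Rmax_right; lra. rewrite Rmin_left, Rmax_right; lra.
  - rewrite (rect_swap_y' v a b d c Hc1).
    rewrite (goursat v a b d c). apply Copp_0. lra. lra. intros x y Hx Hy. apply H.
    rewrite Rmin_left, Rmax_right; lra. rewrite Rmin_right, Rmax_left; lra.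
  - rewrite (rect_swap_x' v b a c d Hc2).
    rewrite (goursat v b a c d). apply Copp_0. lra. lra. intros x y Hx Hy. apply H.
    rewrite Rmin_right, Rmax_left; lra. rewrite Rmin_left, Rmax_right; lra.
  - rewrite (rect_swap_x' v b a c d Hc2).
    rewrite (rect_swap_y' v b a d c Hc').
    rewrite (goursat v b a d c). rewrite Copp_0. apply Copp_0. lra. lra. intros x y Hx Hy. apply H.
    rewrite Rmin_right, Rmax_left; lra. rewrite Rmin_right, Rmax_left; lra.
Qed.

Lemma abs_between a b t : Rmin a b <= t <= Rmax a b -> Rabs t <= Rmax (Rabs a) (Rabs b).
Proof.
  intros H. pose proof (Rmax_l (Rabs a) (Rabs b)). pose proof (Rmax_r (Rabs a) (Rabs b)).
  pose proof (Rle_abs a). pose proof (Rle_abs b). pose proof (Rle_abs (-a)). pose proof (Rle_abs (-b)).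
  rewrite !Rabs_Ropp in *. apply Rabs_le.
  destruct (Rle_dec a b).
  - rewrite Rmin_left, Rmax_right in H by lra. lra.
  - rewrite Rmin_right, Rmax_left in H by lra. lra.
Qed.

Lemma abs_between0 x t : Rmin 0 x <= t <= Rmax 0 x -> Rabs t <= Rabs x.
Proof.
  intros H. pose proof (abs_between _ _ _ H). rewrite Rabs_R0 in H0.
  pose proof (Rabs_pos x). rewrite Rmax_right in H0 by lra. auto.
Qed.

Definition Fp (v : C -> C) (z : C) : C := (Hi v 0 0 (fst z) + Ci * Vi v (fst z) 0 (snd z))%C.

Lemma Fp_incr v x y x' y' :
  (forall t s, Rabs t <= Rmax (Rabs x) (Rabs x') -> Rabs s <= Rmax (Rabs y) (Rabs y') -> cdiff v (t,s)) ->
  (Fp v (x',y') - Fp v (x,y))%C = (Hi v y x x' + Ci * Vi v x' y y')%C.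
Proof.
  intros H.
  assert (Hc : forall t s, Rabs t <= Rmax (Rabs x) (Rabs x') -> Rabs s <= Rmax (Rabs y) (Rabs y') -> ccont v (t,s))
    by (intros; apply ccont_of_cdiff; auto).
  pose proof (Rmax_l (Rabs x) (Rabs x')). pose proof (Rmax_r (Rabs x) (Rabs x')).
  pose proof (Rmax_l (Rabs y) (Rabs y')). pose proof (Rmax_r (Rabs y) (Rabs y')).
  pose proof (Rabs_pos y). pose proof (Rabs_pos x).
  assert (Z0 : Rabs 0 = 0) by apply Rabs_R0.
  assert (E1 : Hi v 0 0 x' = (Hi v 0 0 x + Hi v 0 x x')%C).
  { symmetry. apply RInt_chasles_C.
    apply exH. intros t Ht. apply Hc. pose proof (abs_between0 _ _ Ht). lra. rewrite Z0; lra.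
    apply exH. intros t Ht. apply Hc. apply abs_between; auto. rewrite Z0; lra. }
  assert (E2 : Vi v x' 0 y' = (Vi v x' 0 y + Vi v x' y y')%C).
  { symmetry. apply RInt_chasles_C.
    apply exV. intros t Ht. apply Hc. lra. pose proof (abs_between0 _ _ Ht). lra.
    apply exV. intros t Ht. apply Hc. lra. apply abs_between; auto. }
  assert (E3 : rect v x x' 0 y = 0%C).
  { apply goursat_gen. intros t s Ht Hs. apply H. apply abs_between; auto.
    pose proof (abs_between0 _ _ Hs). lra. }
  unfold rect in E3. unfold Fp; simpl. rewrite E1, E2.
  match type of E3 with ?Zl = _ => match goal with |- ?L = ?R =>
    assert (HL : L = (R + Zl)%C) by ring end end.
  rewrite HL, E3. ring.
Qed.

Lemma Disc_sq z : Disc z -> fst z ^ 2 + snd z ^ 2 < 1.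
Proof. unfold Disc. intros Hz. rewrite <- Cmod2_alt. pose proof (Cmod_ge_0 z). nra. Qed.

Lemma Disc_of t s : t ^ 2 + s ^ 2 < 1 -> Disc (t, s).
Proof. intros H. unfold Disc. pose proof (Cmod2_alt (t,s)). simpl in H0. pose proof (Cmod_ge_0 (t,s)). nra. Qed.

Lemma disc_r z : Disc z -> exists r, 0 < r /\ (Rabs (fst z) + r) ^ 2 + (Rabs (snd z) + r) ^ 2 < 1.
Proof.
  intros Hz. pose proof (Disc_sq z Hz). set (x := fst z) in *. set (y := snd z) in *.
  set (A := Rabs x + Rabs y). assert (HA : 0 <= A) by (unfold A; pose proof (Rabs_pos x); pose proof (Rabs_pos y); lra).
  set (q := x ^ 2 + y ^ 2) in *.
  exists ((1 - q) / (4 * A + 4)). split. apply Rdiv_lt_0_compat; lra.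
  set (r := (1 - q) / (4 * A + 4)).
  assert (Hr : r * (4 * A + 4) = 1 - q) by (unfold r; field; lra).
  assert (Hr0 : 0 < r) by (unfold r; apply Rdiv_lt_0_compat; lra).
  assert (Ex : (Rabs x + r) ^ 2 + (Rabs y + r) ^ 2 = q + 2 * r * A + 2 * r ^ 2).
  { unfold q, A. rewrite <- !(pow2_abs x), <- !(pow2_abs y). ring. }
  rewrite Ex. assert (0 <= q) by (unfold q; nra).
  assert (r <= 1/4) by nra.
  assert (2 * r ^ 2 <= 2 * r) by nra.
  assert (2 * r * A + 2 * r = (1 - q) / 2) by nra.
  lra.
Qed.

Lemma RInt_bound_abs (f : R -> C) a b M : ex_RInt (V:=CR) f a b ->
  (forall t, Rmin a b <= t <= Rmax a b -> Cmod (f t) <= M) -> Cmod (RInt (V:=CR) f a b) <= Rabs (b - a) * M.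
Proof.
  intros Hex H. rewrite <- norm_CR.
  apply (norm_RInt_le_const_abs (V:=CR) f a b); auto.
  intros x Hx. rewrite norm_CR. auto.
  apply (RInt_correct (V:=CR)); auto.
Qed.

Lemma pair_split x y : ((x, y) : C) = (RtoC x + Ci * RtoC y)%C.
Proof. apply injective_projections; simpl; ring. Qed.

Lemma Fp_deriv v : (forall z, Disc z -> cdiff v z) -> forall z, Disc z -> cderiv (Fp v) z (v z).
Proof.
  intros Hv z Hz. destruct (disc_r z Hz) as [r [Hr Hr1]].
  pose proof (ccont_of_cdiff v z (Hv z Hz)) as Hcz.
  destruct z as [x y]; simpl in Hr1.
  apply cderiv_fold. intros eps He.
  destruct (Hcz (eps / 2) ltac:(lra)) as [d1 [Hd1 Hc1]].
  exists (Rmin r (d1 / 2)). split. apply Rmin_pos; lra.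
  intros [x' y'] Hw.
  pose proof (Rmin_l r (d1/2)). pose proof (Rmin_r r (d1/2)).
  set (W := Cmod ((x', y') - (x, y))%C) in *.
  assert (H1 : Rabs (x' - x) <= W) by apply (Cmod_fst ((x', y') - (x, y))%C).
  assert (H2 : Rabs (y' - y) <= W) by apply (Cmod_snd ((x', y') - (x, y))%C).
  assert (REG : forall t s, Rabs t <= Rmax (Rabs x) (Rabs x') -> Rabs s <= Rmax (Rabs y) (Rabs y') -> cdiff v (t,s)).
  { intros t s Ht Hs. apply Hv. apply Disc_of.
    assert (Rabs x' <= Rabs x + r). { pose proof (Rabs_triang_inv x' x). lra. }
    assert (Rabs y' <= Rabs y + r). { pose proof (Rabs_triang_inv y' y). lra. }
    assert (Rabs t <= Rabs x + r). { unfold Rmax in Ht. destruct Rle_dec; pose proof (Rabs_pos x); lra. }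
    assert (Rabs s <= Rabs y + r). { unfold Rmax in Hs. destruct Rle_dec; pose proof (Rabs_pos y); lra. }
    rewrite <- (pow2_abs t), <- (pow2_abs s).
    pose proof (Rabs_pos t). pose proof (Rabs_pos s). pose proof (Rabs_pos x). pose proof (Rabs_pos y).
    assert (Rabs t ^ 2 <= (Rabs x + r) ^ 2) by (apply pow_incr; lra).
    assert (Rabs s ^ 2 <= (Rabs y + r) ^ 2) by (apply pow_incr; lra).
    lra. }
  assert (REGc : forall t s, Rabs t <= Rmax (Rabs x) (Rabs x') -> Rabs s <= Rmax (Rabs y) (Rabs y') -> ccont v (t,s))
    by (intros; apply ccont_of_cdiff; auto).
  rewrite Fp_incr by exact REG.
  assert (EA : (Hi v y x x' - RtoC (x' - x) * v (x, y))%C = RInt (V:=CR) (fun t => v (t, y) - v (x, y))%C x x').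
  { unfold Hi. symmetry. rewrite (RInt_minus (V:=CR) (fun t => v (t,y)) (fun _ => v (x,y))).
    rewrite (RInt_const (V:=CR)). rewrite minus_CR, scal_CR. reflexivity.
    apply exH. intros t Ht. apply REGc. apply abs_between; auto. apply Rmax_l.
    apply ex_RInt_const. }
  assert (EB : (Vi v x' y y' - RtoC (y' - y) * v (x, y))%C = RInt (V:=CR) (fun s => v (x', s) - v (x, y))%C y y').
  { unfold Vi. symmetry. rewrite (RInt_minus (V:=CR) (fun s => v (x',s)) (fun _ => v (x,y))).
    rewrite (RInt_const (V:=CR)). rewrite minus_CR, scal_CR. reflexivity.
    apply exV. intros t Ht. apply REGc. apply Rmax_r. apply abs_between; auto.
    apply ex_RInt_const. }
  assert (BA : Cmod (RInt (V:=CR) (fun t => v (t, y) - v (x, y))%C x x') <= Rabs (x' - x) * (eps / 2)).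
  { apply RInt_bound_abs.
    apply (ex_RInt_minus (V:=CR) (fun t => v (t,y)) (fun _ => v (x,y))).
    apply exH. intros t Ht. apply REGc. apply abs_between; auto. apply Rmax_l.
    apply ex_RInt_const.
    intros t Ht. left. apply Hc1. rewrite Cmod_pair_x.
    assert (Rabs (t - x) <= Rabs (x' - x)).
    { apply Rabs_le. pose proof (Rle_abs (x' - x)). pose proof (Rle_abs (-(x' - x))). rewrite Rabs_Ropp in *.
      destruct (Rle_dec x x'). rewrite Rmin_left, Rmax_right in Ht by lra. lra.
      rewrite Rmin_right, Rmax_left in Ht by lra. lra. }
    lra. }
  assert (BB : Cmod (RInt (V:=CR) (fun s => v (x', s) - v (x, y))%C y y') <= Rabs (y' - y) * (eps / 2)).
  { apply RInt_bound_abs.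
    apply (ex_RInt_minus (V:=CR) (fun s => v (x',s)) (fun _ => v (x,y))).
    apply exV. intros t Ht. apply REGc. apply Rmax_r. apply abs_between; auto.
    apply ex_RInt_const.
    intros s Hs. left. apply Hc1.
    assert (Rabs (s - y) <= Rabs (y' - y)).
    { apply Rabs_le. pose proof (Rle_abs (y' - y)). pose proof (Rle_abs (-(y' - y))). rewrite Rabs_Ropp in *.
      destruct (Rle_dec y y'). rewrite Rmin_left, Rmax_right in Hs by lra. lra.
      rewrite Rmin_right, Rmax_left in Hs by lra. lra. }
    eapply Rle_lt_trans; [apply Cmod_le_sum|]. simpl.
    replace (x' + - x) with (x' - x) by ring. replace (s + - y) with (s - y) by ring. lra. }
  replace (Hi v y x x' + Ci * Vi v x' y y' - v (x, y) * ((x', y') - (x, y)))%C with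
    ((Hi v y x x' - RtoC (x' - x) * v (x, y)) + Ci * (Vi v x' y y' - RtoC (y' - y) * v (x, y)))%C.
  2:{ rewrite (pair_split x' y'), (pair_split x y). rewrite !RtoC_minus. ring. }
  rewrite EA, EB.
  eapply Rle_trans; [apply Cmod_triangle|]. rewrite Cmod_Ci_mult.
  assert (Rabs (x' - x) * (eps / 2) <= W * (eps / 2)) by (apply Rmult_le_compat_r; lra).
  assert (Rabs (y' - y) * (eps / 2) <= W * (eps / 2)) by (apply Rmult_le_compat_r; lra).
  lra.
Qed.

Lemma norm_CRn (z : C_R_NormedModule) : norm z = Cmod z.
Proof. apply (norm_CR z). Qed.
Lemma scal_CRn (r : R) (z : C_R_NormedModule) : scal r z = (RtoC r * z)%C.
Proof. apply (scal_CR r z). Qed.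

Lemma line_deriv (Fn : C -> C) z0 d t0 l : cderiv Fn (z0 + RtoC t0 * d)%C l ->
  is_derive (K:=R_AbsRing) (V:=CR) (fun t => Fn (z0 + RtoC t * d)%C) t0 (l * d)%C.
Proof.
  intros Hd. split.
  - apply is_linear_scal_l.
  - intros x Hx. apply (is_filter_lim_locally_unique (K:=R_AbsRing) (V:=AbsRing_NormedModule R_AbsRing)) in Hx. subst x.
    intros eps. pose proof (Cmod_ge_0 d).
    destruct (cderiv_unfold Fn _ l Hd (eps / (Cmod d + 1))) as [del [Hdel Hw]].
    { apply Rdiv_lt_0_compat. apply cond_pos. lra. }
    exists (mkposreal (del / (Cmod d + 1)) ltac:(apply Rdiv_lt_0_compat; lra)).
    intros t Ht. change (Rabs (t - t0) < del / (Cmod d + 1)) in Ht.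
    specialize (Hw (z0 + RtoC t * d)%C).
    replace (z0 + RtoC t * d - (z0 + RtoC t0 * d))%C with (RtoC (t - t0) * d)%C in Hw
      by (rewrite RtoC_minus; ring).
    rewrite Cmod_mult, Cmod_R in Hw.
    assert (Hlt : Rabs (t - t0) * Cmod d < del).
    { apply Rmult_lt_compat_r with (r := Cmod d + 1) in Ht; [|lra].
      unfold Rdiv in Ht. rewrite Rmult_assoc, Rinv_l, Rmult_1_r in Ht by lra.
      pose proof (Rabs_pos (t - t0)). nra. }
    specialize (Hw Hlt).
    rewrite norm_CRn. rewrite scal_CRn.
    change (norm (minus t t0)) with (Rabs (t - t0)).
    change (minus t t0) with (t - t0).
    change (Cmod (Fn (z0 + RtoC t * d) - Fn (z0 + RtoC t0 * d) - RtoC (t - t0) * (l * d))%C <= eps * Rabs (t - t0)).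
    replace (Fn (z0 + RtoC t * d) - Fn (z0 + RtoC t0 * d) - RtoC (t - t0) * (l * d))%C with
      (Fn (z0 + RtoC t * d) - Fn (z0 + RtoC t0 * d) - l * (RtoC (t - t0) * d))%C by ring.
    eapply Rle_trans; [exact Hw|].
    pose proof (Rabs_pos (t - t0)).
    assert (eps / (Cmod d + 1) * Cmod d <= eps).
    { apply Rmult_le_reg_r with (Cmod d + 1); [lra|].
      replace (eps / (Cmod d + 1) * Cmod d * (Cmod d + 1)) with (eps * Cmod d) by (field; lra).
      pose proof (cond_pos eps). nra. }
    nra.
Qed.

Lemma seg_disc z w t : Disc z -> Disc w -> 0 <= t <= 1 -> Disc (z + RtoC t * (w - z))%C.
Proof.
  unfold Disc. intros Hz Hw Ht.
  replace (z + RtoC t * (w - z))%C with (RtoC (1 - t) * z + RtoC t * w)%C by (rewrite RtoC_minus; ring).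
  eapply Rle_lt_trans; [apply Cmod_triangle|]. rewrite !Cmod_mult, !Cmod_R.
  rewrite !Rabs_right by lra. pose proof (Cmod_ge_0 z). pose proof (Cmod_ge_0 w).
  destruct (Req_dec t 1). subst. nra. assert (0 < 1 - t) by lra. nra.
Qed.

Lemma Fp_lip v M : (forall z, Disc z -> cdiff v z) -> (forall z, Disc z -> Cmod (v z) <= M) ->
  forall z w, Disc z -> Disc w -> Cmod (Fp v w - Fp v z) <= M * Cmod (w - z).
Proof.
  intros Hv HM z w Hz Hw. set (d := (w - z)%C).
  assert (Hseg : forall t, 0 <= t <= 1 -> Disc (z + RtoC t * d)%C) by (intros; apply seg_disc; auto).
  assert (HI := is_RInt_derive (V:=C_R_CompleteNormedModule) (fun t => Fp v (z + RtoC t * d)%C) (fun t => (v (z + RtoC t * d) * d)%C) 0 1).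
  rewrite Rmin_left, Rmax_right in HI by lra.
  assert (HI' : is_RInt (V:=CR) (fun t => (v (z + RtoC t * d) * d)%C) 0 1 (Fp v w - Fp v z)%C).
  { replace (Fp v w - Fp v z)%C with (minus (Fp v (z + RtoC 1 * d)%C) (Fp v (z + RtoC 0 * d)%C)).
    apply HI.
    - intros t Ht. apply line_deriv. apply Fp_deriv; auto.
    - intros t0 Ht0. apply cont_of_ccont. intros eps He.
      pose proof (Cmod_ge_0 d).
      destruct (ccont_of_cdiff v _ (Hv _ (Hseg t0 Ht0)) (eps / (Cmod d + 1))) as [del [Hdel Hc]].
      { apply Rdiv_lt_0_compat; lra. }
      exists (del / (Cmod d + 1)). split. apply Rdiv_lt_0_compat; lra.
      intros t Ht.
      replace (v (z + RtoC t * d) * d - v (z + RtoC t0 * d) * d)%C with ((v (z + RtoC t * d) - v (z + RtoC t0 * d)) * d)%C by ring.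
      rewrite Cmod_mult.
      assert (Hl : Cmod (z + RtoC t * d - (z + RtoC t0 * d))%C < del).
      { replace (z + RtoC t * d - (z + RtoC t0 * d))%C with (RtoC (t - t0) * d)%C by (rewrite RtoC_minus; ring).
        rewrite Cmod_mult, Cmod_R.
        apply Rmult_lt_compat_r with (r := Cmod d + 1) in Ht; [|lra].
        unfold Rdiv in Ht. rewrite Rmult_assoc, Rinv_l, Rmult_1_r in Ht by lra.
        pose proof (Rabs_pos (t - t0)). nra. }
      specialize (Hc _ Hl).
      assert (Cmod (v (z + RtoC t * d) - v (z + RtoC t0 * d))%C * (Cmod d + 1) < eps).
      { apply Rmult_lt_compat_r with (r := Cmod d + 1) in Hc; [|lra].
        unfold Rdiv in Hc. rewrite Rmult_assoc, Rinv_l, Rmult_1_r in Hc by lra. exact Hc. }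
      pose proof (Cmod_ge_0 (v (z + RtoC t * d) - v (z + RtoC t0 * d))%C). nra.
    - replace (z + RtoC 1 * d)%C with w by (unfold d; ring). replace (z + RtoC 0 * d)%C with z by (unfold d; ring). reflexivity. }
  rewrite <- norm_CR.
  eapply Rle_trans.
  apply (norm_RInt_le_const (V:=CR) (fun t => (v (z + RtoC t * d) * d)%C) 0 1 _ (M * Cmod d)); [lra| |exact HI'].
  intros t Ht. rewrite norm_CR, Cmod_mult. apply Rmult_le_compat_r. apply Cmod_ge_0. apply HM, Hseg; auto.
  lra.
Qed.

Lemma ball_of_Cmod (z w : C) (e : R) : Cmod (w - z) < e -> ball (M:=C_UniformSpace) z e w.
Proof. intros H. apply C_NormedModule_mixin_compat1. exact H. Qed.

Lemma Cmod_of_ball (z w : C) (e : posreal) : ball (M:=C_UniformSpace) z e w -> Cmod (w - z) < 2 * e.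
Proof. intros H. pose proof (C_NormedModule_mixin_compat2 z w e H). pose proof (cond_pos e).
  assert (sqrt 2 < 2). { rewrite <- (sqrt_square 2) at 2 by lra. apply sqrt_lt_1; lra. }
  change (Cmod (w - z) < sqrt 2 * e) in H0. nra. Qed.

Lemma disc_near z0 (e : posreal) : Cmod z0 <= 1 -> exists x, Disc x /\ ball (M:=C_UniformSpace) z0 e x.
Proof.
  intros Hz. set (s := Rmin (1/2) (e/2)).
  assert (Hs : 0 < s) by (apply Rmin_pos; [lra| pose proof (cond_pos e); lra]).
  assert (Hs1 : s <= 1/2) by apply Rmin_l. assert (Hs2 : s <= e/2) by apply Rmin_r.
  exists (RtoC (1 - s) * z0)%C. split.
  - unfold Disc. rewrite Cmod_mult, Cmod_R, Rabs_right by lra. pose proof (Cmod_ge_0 z0). nra.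
  - apply ball_of_Cmod. replace (RtoC (1 - s) * z0 - z0)%C with (- (RtoC s * z0))%C by (rewrite RtoC_minus; ring).
    rewrite Cmod_opp, Cmod_mult, Cmod_R, Rabs_right by lra. pose proof (cond_pos e). pose proof (Cmod_ge_0 z0). nra.
Qed.

Lemma ext_exists (f : C -> C) K : 0 <= K ->
  (forall z w, Disc z -> Disc w -> Cmod (f w - f z) <= K * Cmod (w - z)) ->
  forall z0, Cmod z0 <= 1 -> exists L, ext_value f z0 L.
Proof.
  intros HK Hl z0 Hz0.
  set (G := within Disc (locally (T:=C_UniformSpace) z0)).
  assert (FG : Filter G) by (apply within_filter; apply locally_filter).
  assert (PG : ProperFilter G).
  { constructor; auto. intros P [e He]. destruct (disc_near z0 e Hz0) as [x [Hx Hb]].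
    exists x. apply He; auto. }
  assert (PG' : ProperFilter (filtermap f G)) by (apply filtermap_proper_filter; auto).
  assert (CG : cauchy (T:=C_CompleteNormedModule) (filtermap f G)).
  { intros eps. pose proof (cond_pos eps).
    set (del := mkposreal (eps / (4 * K + 4)) ltac:(apply Rdiv_lt_0_compat; lra)).
    destruct (disc_near z0 del Hz0) as [zs [Hzs Hbs]].
    exists (f zs). exists del. intros z Hb Hz.
    apply ball_of_Cmod.
    pose proof (Cmod_of_ball _ _ _ Hb). pose proof (Cmod_of_ball _ _ _ Hbs).
    assert (Cmod (z - zs) < 4 * del).
    { replace (z - zs)%C with ((z - z0) + - (zs - z0))%C by ring.
      eapply Rle_lt_trans; [apply Cmod_triangle|]. rewrite Cmod_opp. lra. }
    specialize (Hl zs z Hzs Hz).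
    assert (4 * K * del < eps).
    { simpl. apply Rmult_lt_reg_r with (4 * K + 4); [lra|].
      replace (4 * K * (eps / (4 * K + 4)) * (4 * K + 4)) with (4 * K * eps) by (field; lra). nra. }
    pose proof (Cmod_ge_0 (z - zs)%C). nra. }
  exists (lim (T:=C_CompleteNormedModule) (filtermap f G)).
  unfold ext_value. intros P [eps HP].
  eapply filter_imp; [|apply (complete_cauchy (T:=C_CompleteNormedModule) (filtermap f G) PG' CG eps)].
  intros x Hx. apply HP. exact Hx.
Qed.

Inductive pe := PC (c : C) | PX | PAdd (p q : pe) | PMul (p q : pe).
Fixpoint pev p (z : C) : C := match p with
  | PC c => c | PX => z | PAdd p q => (pev p z + pev q z)%C | PMul p q => (pev p z * pev q z)%C end.
Fixpoint pder p := match p with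
  | PC _ => PC 0 | PX => PC 1 | PAdd p q => PAdd (pder p) (pder q)
  | PMul p q => PAdd (PMul (pder p) q) (PMul p (pder q)) end.

Lemma cderiv_id z : cderiv (fun w => w) z 1%C.
Proof.
  apply cderiv_fold. intros eps He. exists 1. split. lra. intros w _.
  cbv beta. match goal with |- Cmod ?X <= _ => replace X with (RtoC 0) by ring end. rewrite Cmod_0.
  pose proof (Cmod_ge_0 (w - z)). nra.
Qed.

Lemma cderiv_mult f g z df dg : cderiv f z df -> cderiv g z dg ->
  cderiv (fun w => f w * g w)%C z (df * g z + f z * dg)%C.
Proof.
  intros Hf Hg. apply cderiv_fold. intros eps He.
  pose proof (ccont_of_cdiff g z (ex_intro _ dg Hg)) as Cg.
  set (A := Cmod (g z) + 1). set (B := Cmod (f z)). set (D := Cmod df).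
  assert (HA : 0 < A) by (unfold A; pose proof (Cmod_ge_0 (g z)); lra).
  assert (HB : 0 <= B) by apply Cmod_ge_0. assert (HD : 0 <= D) by apply Cmod_ge_0.
  destruct (cderiv_unfold f z df Hf (eps / (3 * A))) as [d1 [Hd1 H1]]. apply Rdiv_lt_0_compat; lra.
  destruct (cderiv_unfold g z dg Hg (eps / (3 * (B + 1)))) as [d2 [Hd2 H2]]. apply Rdiv_lt_0_compat; lra.
  destruct (Cg (Rmin 1 (eps / (3 * (D + 1))))) as [d3 [Hd3 H3]].
  apply Rmin_pos; [lra|apply Rdiv_lt_0_compat; lra].
  exists (Rmin d1 (Rmin d2 d3)). split. repeat apply Rmin_pos; auto.
  intros w Hw.
  pose proof (Rmin_l d1 (Rmin d2 d3)). pose proof (Rmin_r d1 (Rmin d2 d3)).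
  pose proof (Rmin_l d2 d3). pose proof (Rmin_r d2 d3).
  specialize (H1 w ltac:(lra)). specialize (H2 w ltac:(lra)). specialize (H3 w ltac:(lra)).
  pose proof (Rmin_l 1 (eps / (3 * (D + 1)))). pose proof (Rmin_r 1 (eps / (3 * (D + 1)))).
  set (h := Cmod (w - z)) in *. assert (Hh : 0 <= h) by apply Cmod_ge_0.
  replace (f w * g w - f z * g z - (df * g z + f z * dg) * (w - z))%C with
    ((f w - f z - df * (w - z)) * g w + f z * (g w - g z - dg * (w - z)) + df * (w - z) * (g w - g z))%C by ring.
  assert (Gw : Cmod (g w) <= A).
  { unfold A. replace (g w) with (g z + (g w - g z))%C by ring.
    eapply Rle_trans; [apply Cmod_triangle|]. lra. }
  assert (T1 : Cmod ((f w - f z - df * (w - z)) * g w) <= eps / 3 * h).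
  { rewrite Cmod_mult. pose proof (Cmod_ge_0 (g w)).
    pose proof (Cmod_ge_0 (f w - f z - df * (w - z))%C).
    apply Rle_trans with (eps / (3 * A) * h * A).
    apply Rmult_le_compat; [apply Cmod_ge_0|apply Cmod_ge_0|exact H1|exact Gw].
    right. field. lra. }
  assert (T2 : Cmod (f z * (g w - g z - dg * (w - z))) <= eps / 3 * h).
  { rewrite Cmod_mult. fold B. pose proof (Cmod_ge_0 (g w - g z - dg * (w - z))%C).
    apply Rle_trans with (B * (eps / (3 * (B + 1)) * h)). apply Rmult_le_compat_l; auto.
    assert (B * (eps / (3 * (B + 1))) <= eps / 3).
    { apply Rmult_le_reg_r with (3 * (B + 1)); [lra|].
      replace (B * (eps / (3 * (B + 1))) * (3 * (B + 1))) with (B * eps) by (field; lra). nra. }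
    rewrite <- Rmult_assoc. apply Rmult_le_compat_r; auto. }
  assert (T3 : Cmod (df * (w - z) * (g w - g z)) <= eps / 3 * h).
  { rewrite !Cmod_mult. fold D h. pose proof (Cmod_ge_0 (g w - g z)%C).
    assert (D * (eps / (3 * (D + 1))) <= eps / 3).
    { apply Rmult_le_reg_r with (3 * (D + 1)); [lra|].
      replace (D * (eps / (3 * (D + 1))) * (3 * (D + 1))) with (D * eps) by (field; lra). nra. }
    assert (D * Cmod (g w - g z) <= D * (eps / (3 * (D + 1)))) by (apply Rmult_le_compat_l; lra).
    nra. }
  eapply Rle_trans; [apply Cmod_triangle|].
  eapply Rle_trans; [apply Rplus_le_compat_r; apply Cmod_triangle|].
  lra.
Qed.

Lemma pev_deriv p z : cderiv (pev p) z (pev (pder p) z).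
Proof.
  induction p; simpl.
  - exact (is_derive_const (K:=C_AbsRing) (V:=C_NormedModule) c z).
  - apply cderiv_id.
  - exact (is_derive_plus (K:=C_AbsRing) (V:=C_NormedModule) _ _ z _ _ IHp1 IHp2).
  - apply cderiv_mult; auto.
Qed.

Definition cut (f : C -> C) (z : C) : C := if Rlt_dec (Cmod z) 1 then f z else 0%C.

Lemma cut_in f z : Disc z -> cut f z = f z.
Proof. unfold cut, Disc. intros H. destruct Rlt_dec; [reflexivity|contradiction]. Qed.

Lemma cut_deriv f z l : Disc z -> cderiv f z l -> cderiv (cut f) z l.
Proof.
  intros Hz Hd. apply cderiv_fold. intros eps He.
  destruct (cderiv_unfold f z l Hd eps He) as [del [Hdel Hw]].
  exists (Rmin del (1 - Cmod z)). split. apply Rmin_pos; auto. unfold Disc in Hz; lra.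
  intros w Hw'. pose proof (Rmin_l del (1 - Cmod z)). pose proof (Rmin_r del (1 - Cmod z)).
  assert (Disc w).
  { unfold Disc. replace w with (z + (w - z))%C by ring.
    eapply Rle_lt_trans; [apply Cmod_triangle|]. lra. }
  rewrite !cut_in by auto. apply Hw. lra.
Qed.

Fixpoint pb p := match p with
  | PC c => Cmod c | PX => 1 | PAdd p q => pb p + pb q | PMul p q => pb p * pb q end.

Lemma pb_nonneg p : 0 <= pb p.
Proof. induction p; simpl; try apply Cmod_ge_0; try lra. nra. Qed.

Lemma pev_bound p z : Cmod z <= 1 -> Cmod (pev p z) <= pb p.
Proof.
  intros Hz. induction p; simpl.
  - lra.
  - lra.
  - eapply Rle_trans; [apply Cmod_triangle|]. lra.
  - rewrite Cmod_mult. apply Rmult_le_compat; auto; apply Cmod_ge_0.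
Qed.

Lemma Hinf_cut p : Hinf (cut (pev p)).
Proof.
  split; [|split].
  - intros z Hz. exists (pev (pder p) z). apply cut_deriv; auto. apply pev_deriv.
  - exists (pb p). intros z Hz. rewrite cut_in by auto. apply pev_bound. unfold Disc in Hz; lra.
  - intros z Hz. unfold cut, Disc in *. destruct Rlt_dec; [contradiction|reflexivity].
Qed.

Lemma one_H_cut : one_H = cut (pev (PC 1)).
Proof. reflexivity. Qed.

Lemma eta_cut eta : MaxIdeal eta -> forall p, eta (cut (pev p)) = pev p (eta (cut (pev PX))).
Proof.
  intros (H0 & Hadd & Hsc & Hmul & Hone). induction p.
  - transitivity (eta (fun z => c * one_H z)%C).
    + f_equal. apply functional_extensionality. intros z. unfold cut, one_H; simpl. destruct Rlt_dec; ring.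
    + rewrite (Hsc c one_H), Hone. simpl. ring. rewrite one_H_cut. apply Hinf_cut.
  - reflexivity.
  - transitivity (eta (fun z => cut (pev p1) z + cut (pev p2) z)%C).
    + f_equal. apply functional_extensionality. intros z. unfold cut; simpl. destruct Rlt_dec; ring.
    + rewrite (Hadd (cut (pev p1)) (cut (pev p2))), IHp1, IHp2 by apply Hinf_cut. reflexivity.
  - transitivity (eta (fun z => cut (pev p1) z * cut (pev p2) z)%C).
    + f_equal. apply functional_extensionality. intros z. unfold cut; simpl. destruct Rlt_dec; ring.
    + rewrite (Hmul (cut (pev p1)) (cut (pev p2))), IHp1, IHp2 by apply Hinf_cut. reflexivity.
Qed.

Lemma pev_ext p z : exists L, ext_value (pev p) z L /\ L = pev p z.
Proof.
  exists (pev p z). split; auto.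
  pose proof (ccont_of_cdiff (pev p) z (ex_intro _ _ (pev_deriv p z))) as Hc.
  unfold ext_value. intros P [eps HP].
  destruct (Hc eps (cond_pos eps)) as [del [Hdel Hw]].
  exists (mkposreal (del / 2) ltac:(lra)). intros w Hb _.
  apply HP. apply ball_of_Cmod. apply Hw.
  pose proof (Cmod_of_ball _ _ _ Hb). simpl in H. lra.
Qed.

Lemma Cmult_integral' (a b : C) : (a * b)%C = 0%C -> a = 0%C \/ b = 0%C.
Proof.
  intros H. assert (Cmod a * Cmod b = 0) by (rewrite <- Cmod_mult, H; apply Cmod_0).
  destruct (Rmult_integral _ _ H0); [left|right]; apply Cmod_eq_0; auto.
Qed.

Lemma hinf_primitive v : Hinf v -> exists Fn, Sinf_with_deriv Fn v /\
  forall z0, Cmod z0 <= 1 -> exists L, ext_value Fn z0 L.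
Proof.
  intros Hv. pose proof Hv as (Hd & [M HM] & H0).
  exists (Fp v). split.
  - split; auto. intros z Hz. apply Fp_deriv; auto.
  - apply ext_exists with M.
    + eapply Rle_trans; [apply Cmod_ge_0|]. apply (HM 0%C). unfold Disc. rewrite Cmod_0. lra.
    + apply Fp_lip; auto.
Qed.

Lemma poly_sep p z1 z2 (e1 e2 : (C -> C) -> C) w1 w2 : MaxIdeal e1 -> MaxIdeal e2 ->
  (pev p z1 + pev (pder p) (e1 (cut (pev PX))) * w1 <> pev p z2 + pev (pder p) (e2 (cut (pev PX))) * w2)%C ->
  exists f g : C -> C, Sinf_with_deriv f g /\ exists L1 L2 : C,
    ext_value f z1 L1 /\ ext_value f z2 L2 /\ (L1 + e1 g * w1)%C <> (L2 + e2 g * w2)%C.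
Proof.
  intros M1 M2 Hne. exists (pev p), (cut (pev (pder p))). split.
  - split. apply Hinf_cut. intros z Hz. rewrite cut_in by auto. apply pev_deriv.
  - destruct (pev_ext p z1) as [L1 [HL1 ->]]. destruct (pev_ext p z2) as [L2 [HL2 ->]].
    exists (pev p z1), (pev p z2). split; auto. split; auto.
    rewrite (eta_cut e1 M1 (pder p)), (eta_cut e2 M2 (pder p)). exact Hne.
Qed.

Lemma Circle_neq0 w : Circle w -> w <> 0%C.
Proof. unfold Circle. intros H E. rewrite E, Cmod_0 in H. lra. Qed.

Definition qpoly (a b : C) := PMul (PAdd PX (PC (-a))) (PAdd PX (PC (-b))).
Definition herm (z1 z2 : C) := PMul (PMul (PAdd PX (PC (-z2))) (PAdd PX (PC (-z2))))
   (PAdd (PC (z1 - z2)) (PAdd (PAdd (PC z1) (PMul (PC (- RtoC 1)) PX)) (PAdd (PC z1) (PMul (PC (- RtoC 1)) PX)))).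

Lemma sub_neq0 (x y : C) : x <> y -> (x + - y)%C <> 0%C.
Proof. intros H E. apply H. replace x with (x + - y + y)%C by ring. rewrite E. ring. Qed.

Lemma eq_of_sub0 (x y : C) : (x + - y)%C = 0%C -> x = y.
Proof. intros E. replace x with (x + - y + y)%C by ring. rewrite E. ring. Qed.

Lemma sep_polys (z1 z2 s1 s2 w1 w2 : C) : z1 <> z2 ->
  exists p, (pev p z1 + pev (pder p) s1 * w1 <> pev p z2 + pev (pder p) s2 * w2)%C.
Proof.
  intros Ez. pose proof (sub_neq0 _ _ Ez) as Nz.
  destruct (classic (pev (qpoly s1 s2) z1 = 0%C)) as [Q1|Q1].
  - destruct (classic (pev (qpoly s1 s2) z2 = 0%C)) as [Q2|Q2].
    + exists (herm z1 z2).
      assert (D : forall s, s = z1 \/ s = z2 -> pev (pder (herm z1 z2)) s = 0%C).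
      { intros s [-> | ->]; simpl; ring. }
      simpl in Q1, Q2.
      destruct (Cmult_integral' _ _ Q1) as [A1|A1]; apply eq_of_sub0 in A1;
      destruct (Cmult_integral' _ _ Q2) as [A2|A2]; apply eq_of_sub0 in A2.
      * exfalso. apply Ez. congruence.
      * rewrite (D s1), (D s2) by auto.
        assert (P2 : pev (herm z1 z2) z2 = 0%C) by (simpl; ring).
        rewrite P2. intro E. assert (pev (herm z1 z2) z1 = 0%C).
        { replace (pev (herm z1 z2) z1) with (pev (herm z1 z2) z1 + 0 * w1)%C by ring. rewrite E. ring. }
        revert H. replace (pev (herm z1 z2) z1) with ((z1 + - z2) * (z1 + - z2) * (z1 + - z2))%C by (simpl; ring).
        apply Cmult_neq_0; auto. apply Cmult_neq_0; auto.
      * rewrite (D s1), (D s2) by auto.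
        assert (P2 : pev (herm z1 z2) z2 = 0%C) by (simpl; ring).
        rewrite P2. intro E. assert (pev (herm z1 z2) z1 = 0%C).
        { replace (pev (herm z1 z2) z1) with (pev (herm z1 z2) z1 + 0 * w1)%C by ring. rewrite E. ring. }
        revert H. replace (pev (herm z1 z2) z1) with ((z1 + - z2) * (z1 + - z2) * (z1 + - z2))%C by (simpl; ring).
        apply Cmult_neq_0; auto. apply Cmult_neq_0; auto.
      * exfalso. apply Ez. congruence.
    + exists (PMul (PMul (qpoly s1 s2) (qpoly s1 s2)) (PAdd PX (PC (- z1)))).
      assert (D1 : pev (pder (PMul (PMul (qpoly s1 s2) (qpoly s1 s2)) (PAdd PX (PC (- z1))))) s1 = 0%C) by (simpl; ring).
      assert (D2 : pev (pder (PMul (PMul (qpoly s1 s2) (qpoly s1 s2)) (PAdd PX (PC (- z1))))) s2 = 0%C) by (simpl; ring).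
      rewrite D1, D2.
      assert (P1 : pev (PMul (PMul (qpoly s1 s2) (qpoly s1 s2)) (PAdd PX (PC (- z1)))) z1 = 0%C) by (simpl; ring).
      rewrite P1. intro E.
      assert (Z : pev (PMul (PMul (qpoly s1 s2) (qpoly s1 s2)) (PAdd PX (PC (- z1)))) z2 = 0%C).
      { replace (pev (PMul (PMul (qpoly s1 s2) (qpoly s1 s2)) (PAdd PX (PC (- z1)))) z2) with
          ((0 + 0 * w1) - 0 * w2)%C by (rewrite E; ring). ring. }
      revert Z. change (pev (PMul (PMul (qpoly s1 s2) (qpoly s1 s2)) (PAdd PX (PC (- z1)))) z2) with
        ((pev (qpoly s1 s2) z2 * pev (qpoly s1 s2) z2) * (z2 + - z1))%C.
      apply Cmult_neq_0; [apply Cmult_neq_0; auto|]. apply sub_neq0. auto.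
  - exists (PMul (PMul (qpoly s1 s2) (qpoly s1 s2)) (PAdd PX (PC (- z2)))).
    assert (D1 : pev (pder (PMul (PMul (qpoly s1 s2) (qpoly s1 s2)) (PAdd PX (PC (- z2))))) s1 = 0%C) by (simpl; ring).
    assert (D2 : pev (pder (PMul (PMul (qpoly s1 s2) (qpoly s1 s2)) (PAdd PX (PC (- z2))))) s2 = 0%C) by (simpl; ring).
    rewrite D1, D2.
    assert (P2 : pev (PMul (PMul (qpoly s1 s2) (qpoly s1 s2)) (PAdd PX (PC (- z2)))) z2 = 0%C) by (simpl; ring).
    rewrite P2. intro E.
    assert (Z : pev (PMul (PMul (qpoly s1 s2) (qpoly s1 s2)) (PAdd PX (PC (- z2)))) z1 = 0%C).
    { replace (pev (PMul (PMul (qpoly s1 s2) (qpoly s1 s2)) (PAdd PX (PC (- z2)))) z1) with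
        ((0 + 0 * w2) - 0 * w1)%C by (rewrite <- E; ring). ring. }
    revert Z. change (pev (PMul (PMul (qpoly s1 s2) (qpoly s1 s2)) (PAdd PX (PC (- z2)))) z1) with
      ((pev (qpoly s1 s2) z1 * pev (qpoly s1 s2) z1) * (z1 + - z2))%C.
    apply Cmult_neq_0; [apply Cmult_neq_0; auto|]. auto.
Qed.

Theorem proposition2p1 :
  forall (a : C) (T : C -> Prop),
    Disc a ->
    ((forall z, T z <-> Circle z) \/ (forall z, T z <-> z = a)) ->
    forall x1 x2 : C * ((C -> C) -> C) * C,
      in_X T x1 -> in_X T x2 -> x1 <> x2 ->
      exists f g : C -> C,
        Sinf_with_deriv f g /\
        let '(z1, eta1, w1) := x1 in
        let '(z2, eta2, w2) := x2 in
        exists L1 L2 : C,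
          ext_value f z1 L1 /\ ext_value f z2 L2 /\
          (L1 + eta1 g * w1)%C <> (L2 + eta2 g * w2)%C.
Proof.
  intros a T Ha HT [[z1 e1] w1] [[z2 e2] w2] H1 H2 Hne.
  destruct H1 as (T1 & [M1 _] & C1). destruct H2 as (T2 & [M2 _] & C2).
  assert (Hz : forall z, T z -> Cmod z <= 1).
  { destruct HT as [HT|HT]; intros z Hz; apply HT in Hz.
    unfold Circle in Hz; lra. subst. unfold Disc in Ha; lra. }
  change (exists f g : C -> C, Sinf_with_deriv f g /\ exists L1 L2 : C,
          ext_value f z1 L1 /\ ext_value f z2 L2 /\ (L1 + e1 g * w1)%C <> (L2 + e2 g * w2)%C).
  destruct (classic (z1 = z2)) as [Ez|Ez].
  - subst z2. destruct (classic (w1 = w2)) as [Ew|Ew].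
    + subst w2. assert (Ne : e1 <> e2) by (intro; subst; apply Hne; reflexivity).
      assert (Hv : exists v, Hinf v /\ e1 v <> e2 v).
      { apply NNPP; intro Hno. apply Ne. apply functional_extensionality. intros v.
        destruct (classic (Hinf v)) as [Hv|Hv].
        - apply NNPP; intro; apply Hno; exists v; auto.
        - destruct M1 as [Z1 _]; destruct M2 as [Z2 _]. rewrite Z1, Z2; auto. }
      destruct Hv as [v [Hv Hv']].
      destruct (hinf_primitive v Hv) as [Fn [HS Hext]].
      destruct (Hext z1 (Hz z1 T1)) as [L HL].
      exists Fn, v. split; auto. exists L, L. split; auto. split; auto.
      intro E. apply Hv'.
      assert (E' : ((e1 v - e2 v) * w1)%C = 0%C).
      { replace ((e1 v - e2 v) * w1)%C with ((L + e1 v * w1) - (L + e2 v * w1))%C by ring.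
        rewrite E. ring. }
      destruct (Cmult_integral' _ _ E') as [E2|E2].
      * replace (e1 v) with (e1 v - e2 v + e2 v)%C by ring. rewrite E2. ring.
      * exfalso. apply (Circle_neq0 w1 C1 E2).
    + apply poly_sep with (p := PX); auto. simpl. intro E. apply Ew.
      replace w1 with ((z1 + 1 * w1) - z1)%C by ring. rewrite E. ring.
  - destruct (sep_polys z1 z2 (e1 (cut (pev PX))) (e2 (cut (pev PX))) w1 w2 Ez) as [p Hp].
    apply poly_sep with (p := p); auto.
Qed.
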